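(* Let $\mathcal P$ be a non-degenerate polar space of finite rank $n\ge2$ with no thin lines and defect $d=\mathrm{def}(\mathcal P)$, and suppose $\mathfrak N(\mathcal P)$ admits at least one maximal well ordered chain. Then $\mathrm{gr}(\mathcal P)\le 2n+d$ (which equals $d$ when $d$ is infinite).
   Context: A subspace of $\mathcal P$ is a set of points containing every line meeting it in $\ge2$ points; $\mathrm{gr}(\mathcal P)$ is the minimum size of a set of points whose span (smallest subspace containing it) is all of $\mathcal P$. A nice subspace is a subspace containing two mutually disjoint maximal singular subspaces; $\mathfrak N(\mathcal P)$ is the poset of nice subspaces under inclusion. $\mathrm{def}(\mathcal P)$ is the least upper bound of the lengths (cardinality minus one) of the well ordered chains of $\mathfrak N(\mathcal P)$. A maximal well ordered chain is one that is maximal among well ordered chains. *)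

(* Defs.v *)
(* Point-line geometries / polar spaces, nice subspaces,
   well ordered chains, defect and generating rank (cardinal bounds are
   expressed by injections into types). *)
From Stdlib Require Import Arith.

Set Implicit Arguments.

Section PolarDefs.
Variables (P L : Type) (inc : P -> L -> Prop).

Definition subset (X Y : P -> Prop) : Prop := forall p, X p -> Y p.

Definition collinear (p q : P) : Prop :=
  p = q \/ exists l, inc p l /\ inc q l.

(* Buekenhout–Shult polar space: partial linear space (every line has at
   least two points, two distinct points lie on at most one line) satisfying
   the one-or-all axiom. *)
Definition is_polar_space : Prop :=
  (forall l, exists p q, p <> q /\ inc p l /\ inc q l) /\
  (forall p q l1 l2, p <> q -> inc p l1 -> inc q l1 -> inc p l2 -> inc q l2 -> l1 = l2) /\
  (forall p l, (forall x, inc x l -> collinear p x) \/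
               (exists! x, inc x l /\ collinear p x)).

Definition nondegenerate : Prop := forall p, exists q, ~ collinear p q.

Definition no_thin_lines : Prop :=
  forall l, exists a b c, a <> b /\ a <> c /\ b <> c /\ inc a l /\ inc b l /\ inc c l.

Definition subspace (X : P -> Prop) : Prop :=
  forall l, (exists p q, p <> q /\ inc p l /\ inc q l /\ X p /\ X q) ->
            forall x, inc x l -> X x.

Definition singular (X : P -> Prop) : Prop :=
  subspace X /\ forall p q, X p -> X q -> collinear p q.

Definition max_singular (X : P -> Prop) : Prop :=
  singular X /\ forall Y, singular Y -> subset X Y -> subset Y X.

Definition rank_ge (m : nat) : Prop :=
  exists X : nat -> P -> Prop,
    (forall i, i < m -> singular (X i) /\ exists p, X i p) /\
    (forall i, S i < m -> subset (X i) (X (S i)) /\ ~ subset (X (S i)) (X i)).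

Definition has_rank (n : nat) : Prop := rank_ge n /\ ~ rank_ge (S n).

Definition span (S : P -> Prop) : P -> Prop :=
  fun p => forall X, subspace X -> subset S X -> X p.

Definition generates (S : P -> Prop) : Prop := forall p, span S p.

Definition nice (X : P -> Prop) : Prop :=
  subspace X /\ exists M1 M2, max_singular M1 /\ max_singular M2 /\
    (forall p, M1 p -> M2 p -> False) /\ subset M1 X /\ subset M2 X.

Definition wo_chain (C : (P -> Prop) -> Prop) : Prop :=
  (forall X, C X -> nice X) /\
  (forall X Y, C X -> C Y -> subset X Y \/ subset Y X) /\
  (forall X Y, C X -> C Y -> subset X Y -> subset Y X -> X = Y) /\
  (forall D : (P -> Prop) -> Prop, (forall X, D X -> C X) -> (exists X, D X) ->
     exists X0, D X0 /\ forall X, D X -> subset X0 X).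

Definition maximal_wo_chain (C : (P -> Prop) -> Prop) : Prop :=
  wo_chain C /\
  forall C', wo_chain C' -> (forall X, C X -> C' X) -> forall X, C' X -> C X.

(* length(C) = |C| - 1 <= |K| *)
Definition length_le (C : (P -> Prop) -> Prop) (K : Type) : Prop :=
  forall X0, C X0 ->
    exists f : {X : P -> Prop | C X /\ X <> X0} -> K,
      forall a b, f a = f b -> proj1_sig a = proj1_sig b.

(* def(P) <= |K|  (K is an upper bound of the chain lengths) *)
Definition defect_le (K : Type) : Prop :=
  forall C, wo_chain C -> length_le C K.

Definition card_le_plus (S : P -> Prop) (m : nat) (K : Type) : Prop :=
  exists f : {p : P | S p} -> ({i : nat | i < m} + K)%type,
    forall a b, f a = f b -> proj1_sig a = proj1_sig b.

End PolarDefs.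

(* Main.v *)
Require Import Defs.
From Stdlib Require Import Arith Lia Classical ClassicalEpsilon FunctionalExtensionality PropExtensionality.

Section Geo.
Variables (P L : Type) (inc : P -> L -> Prop).
Hypothesis Hps : is_polar_space inc.

Local Notation col := (collinear inc).

Lemma col_refl p : col p p.
Proof. left; reflexivity. Qed.

Lemma col_sym p q : col p q -> col q p.
Proof.
  intros [H|[l [H1 H2]]]; [left; auto | right; exists l; auto].
Qed.

Definition perp (A : P -> Prop) : P -> Prop := fun z => forall a, A a -> col z a.

Lemma one_or_all_two a l p q : p <> q -> inc p l -> inc q l -> col a p -> col a q ->
  forall x, inc x l -> col a x.
Proof.
  intros Hpq Hp Hq Hap Haq x Hx.
  destruct Hps as [_ [_ H1]].
  destruct (H1 a l) as [Hall | [x0 [[Hx0 Hc0] Hu]]].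
  - apply Hall, Hx.
  - exfalso. apply Hpq.
    assert (x0 = p) by (apply Hu; auto).
    assert (x0 = q) by (apply Hu; auto). congruence.
Qed.

Lemma perp_sub A : subspace inc (perp A).
Proof.
  intros l [p [q [Hpq [Hp [Hq [HA HB]]]]]] x Hx a Ha.
  apply col_sym. apply (one_or_all_two a l p q); auto; apply col_sym; auto.
Qed.

Lemma inter_sub X Y : subspace inc X -> subspace inc Y -> subspace inc (fun z => X z /\ Y z).
Proof.
  intros HX HY l [p [q [Hpq [Hp [Hq [[H1 H2] [H3 H4]]]]]]] x Hx; split.
  - apply (HX l); auto. exists p, q; auto.
  - apply (HY l); auto. exists p, q; auto.
Qed.

Definition Tset A := fun z => perp A z /\ perp (perp A) z.

Lemma T_singular A : singular inc (Tset A).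
Proof.
  split.
  - apply inter_sub; apply perp_sub.
  - intros z z' [H1 H2] [H3 H4]. apply H2, H3.
Qed.

Lemma T_contains A : (forall a b, A a -> A b -> col a b) -> subset A (Tset A).
Proof.
  intros Hpw a Ha. split.
  - intros b Hb; apply Hpw; auto.
  - intros w Hw; apply col_sym, Hw, Ha.
Qed.

Lemma max_perp M : max_singular inc M -> subset (perp M) M.
Proof.
  intros [HMs HMmax] x Hx.
  set (A := fun y => M y \/ y = x).
  assert (Hpw : forall a b, A a -> A b -> col a b).
  { intros a b [Ha|Ha] [Hb|Hb]; subst.
    - apply HMs; auto.
    - apply col_sym, Hx, Ha.
    - apply Hx, Hb.
    - apply col_refl. }
  apply (HMmax (Tset A) (T_singular A)).
  - intros y Hy. apply T_contains; auto. left; auto.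
  - apply T_contains; auto. right; auto.
Qed.

Definition chainin (X : nat -> P -> Prop) (m : nat) (I : P -> Prop) :=
  (forall i, i < m -> singular inc (X i) /\ (exists p, X i p) /\ subset (X i) I) /\
  (forall i, S i < m -> subset (X i) (X (S i)) /\ ~ subset (X (S i)) (X i)).

Lemma chainin_rank X m I : chainin X m I -> rank_ge inc m.
Proof.
  intros [H1 H2]. exists X. split; auto.
  intros i Hi; destruct (H1 i Hi) as [? [? ?]]; auto.
Qed.

Lemma rank_mono m j : rank_ge inc m -> j <= m -> rank_ge inc j.
Proof.
  intros [X [H1 H2]] Hj. exists X; split; intros; [apply H1|apply H2]; lia.
Qed.

Lemma extend_chain X k I Y : chainin X k I -> singular inc Y -> (exists p, Y p) -> subset Y I ->
  (k = 0 \/ (subset (X (k-1)) Y /\ ~ subset Y (X (k-1)))) ->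
  chainin (fun i => if i <? k then X i else Y) (S k) I.
Proof.
  intros [H1 H2] HY HYn HYI Hc. split.
  - intros i Hi. destruct (Nat.ltb_spec i k); auto.
  - intros i Hi. destruct (Nat.ltb_spec i k), (Nat.ltb_spec (S i) k).
    + apply H2; auto.
    + assert (i = k - 1) by lia. subst i. destruct Hc as [Hc|Hc]; [lia|auto].
    + lia.
    + lia.
Qed.

Lemma chainin_weak X k I J : chainin X k I -> subset I J -> chainin X k J.
Proof.
  intros [H1 H2] HIJ. split; auto. intros i Hi. destruct (H1 i Hi) as [? [? ?]].
  split; auto. split; auto. intros z Hz; auto.
Qed.

Lemma grow (R : (P -> Prop) -> Prop) :
  (forall Y, R Y -> singular inc Y /\ exists p, Y p) ->
  (forall Y, R Y -> exists Y', R Y' /\ subset Y Y' /\ ~ subset Y' Y) ->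
  forall Y, R Y -> forall m, exists X, chainin X (S m) (fun _ => True) /\ R (X m).
Proof.
  intros HR Hg Y HY m. induction m.
  - exists (fun _ => Y). split; auto. split.
    + intros i Hi. destruct (HR Y HY) as [? ?]. split; [auto|split; [auto|intros z _; exact I]].
    + intros; lia.
  - destruct IHm as [X [HX HXm]].
    destruct (Hg _ HXm) as [Y' [HY' [Hs Hns]]].
    exists (fun i => if i <? S m then X i else Y'). split.
    + apply extend_chain; auto.
      * apply HR; auto.
      * apply HR; auto.
      * intros z _; auto.
      * right. replace (S m - 1) with m by lia. auto.
    + rewrite Nat.ltb_irrefl. auto.
Qed.

Variable n : nat.
Hypothesis Hrank : ~ rank_ge inc (S n).

Lemma no_grow (R : (P -> Prop) -> Prop) :
  (forall Y, R Y -> singular inc Y /\ exists p, Y p) ->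
  (forall Y, R Y -> exists Y', R Y' /\ subset Y Y' /\ ~ subset Y' Y) ->
  forall Y, ~ R Y.
Proof.
  intros H1 H2 Y HY. destruct (grow R H1 H2 Y HY n) as [X [HX _]].
  apply Hrank. eapply chainin_rank; eauto.
Qed.

Lemma ext_max Y0 : singular inc Y0 -> (exists p, Y0 p) -> exists M, max_singular inc M /\ subset Y0 M.
Proof.
  intros HY0 HY0n. apply NNPP. intro H.
  apply (no_grow (fun Y => singular inc Y /\ (exists p, Y p) /\ subset Y0 Y)) with Y0.
  - intros Y [? [? ?]]; auto.
  - intros Y [HYs [HYn HYs0]].
    apply NNPP; intro H2. apply H. exists Y. split; auto. split; auto.
    intros Y' HY' Hsub. apply NNPP; intro H3. apply H2. exists Y'.
    split; [split; [exact HY'|split]|split; auto].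
    + destruct HYn as [p Hp]; exists p; auto.
    + intros z Hz; auto.
  - split; [auto|split; [auto|intros z Hz; auto]].
Qed.

Hypothesis Hnd : nondegenerate inc.

Lemma disj k : forall M M', max_singular inc M -> max_singular inc M' ->
  (forall X, ~ chainin X k (fun z => M z /\ M' z)) ->
  exists M'', max_singular inc M'' /\ forall p, M p -> M'' p -> False.
Proof.
  induction k as [|k IH]; intros M M' HM HM' Hch.
  - exfalso. apply (Hch (fun _ _ => False)). split; intros; lia.
  - destruct (classic (exists p, M p /\ M' p)) as [[p [HpM HpM']]|Hno].
    2:{ exists M'. split; auto. intros p H1 H2; apply Hno; eauto. }
    destruct (Hnd p) as [q Hq].
    set (B := fun y => y = q \/ (M' y /\ col q y)).
    assert (HBpw : forall a b, B a -> B b -> col a b).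
    { intros a b [Ha|[Ha1 Ha2]] [Hb|[Hb1 Hb2]]; subst.
      - apply col_refl.
      - auto.
      - apply col_sym; auto.
      - apply (proj2 (proj1 HM')); auto. }
    destruct (ext_max (Tset B) (T_singular B)) as [M'' [HM'' HsubM'']].
    { exists q. apply T_contains; auto. left; auto. }
    assert (HBM'' : forall y, B y -> M'' y) by (intros y Hy; apply HsubM'', T_contains; auto).
    assert (HqM'' : M'' q) by (apply HBM''; left; auto).
    assert (Key : forall y, M y -> M'' y -> M' y).
    { intros y HyM HyM''. apply max_perp; auto. intros m' Hm'.
      destruct (classic (col q m')) as [Hqm|Hqm].
      - apply (proj2 (proj1 HM'')); auto. apply HBM''. right; auto.
      - destruct (classic (m' = p)) as [E|E].
        + subst. apply (proj2 (proj1 HM)); auto.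
        + assert (Hcm : col m' p) by (apply (proj2 (proj1 HM')); auto).
          destruct Hcm as [Hcm|[l [Hml Hpl]]]; [contradiction|].
          destruct Hps as [_ [_ H1]].
          destruct (H1 q l) as [Hall|[r [[Hrl Hqr] Hu]]].
          * exfalso; apply Hq, col_sym, Hall, Hpl.
          * assert (HrM' : M' r).
            { apply (proj1 (proj1 HM') l); auto. exists m', p; auto. }
            assert (Hyr : col y r).
            { apply (proj2 (proj1 HM'')); auto. apply HBM''. right; auto. }
            assert (Hrp : r <> p) by (intro; subst; apply Hq, col_sym; auto).
            assert (Hyp : col y p) by (apply (proj2 (proj1 HM)); auto).
            apply (one_or_all_two y l r p); auto. }
    apply (IH M M''); auto.
    intros X HX.
    apply (Hch (fun i => if i <? k then X i else (fun z => M z /\ M' z))).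
    apply (extend_chain X k); auto.
    + apply (chainin_weak X k (fun z => M z /\ M'' z)); auto.
      intros z [H1 H2]; split; auto.
    + split.
      * apply inter_sub; [apply (proj1 (proj1 HM))|apply (proj1 (proj1 HM'))].
      * intros a b [Ha _] [Hb _]. apply (proj2 (proj1 HM)); auto.
    + exists p; auto.
    + intros z Hz; auto.
    + destruct k as [|k]; [left; auto|right].
      assert (Hsub : subset (X (S k - 1)) (fun z => M z /\ M'' z)).
      { apply (proj1 HX). lia. }
      split.
      * intros z Hz. destruct (Hsub z Hz). split; auto.
      * intro Hs. destruct (Hsub p (Hs p (conj HpM HpM'))) as [_ Hp''].
        apply Hq. apply (proj2 (proj1 HM'')); auto.
Qed.

End Geo.

Section Two.
Variables (P L : Type) (inc : P -> L -> Prop).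

Lemma span_sub A : subspace inc (span inc A).
Proof.
  intros l [p [q [Hpq [Hp [Hq [HA HB]]]]]] x Hx X HX HAX.
  apply (HX l); auto. exists p, q; repeat split; auto; [apply HA|apply HB]; auto.
Qed.

Lemma span_incl A : subset A (span inc A).
Proof. intros a Ha X HX HAX; auto. Qed.

Lemma span_min A X : subspace inc X -> subset A X -> subset (span inc A) X.
Proof. intros HX HAX z Hz; apply Hz; auto. Qed.

Lemma span_mono A B : subset A B -> subset (span inc A) (span inc B).
Proof.
  intros H. apply span_min; [apply span_sub|]. intros z Hz. apply span_incl, H, Hz.
Qed.

Lemma span_empty A z : (forall a, ~ A a) -> ~ span inc A z.
Proof.
  intros H Hz. apply (span_min A (fun _ => False)) in Hz; auto.
  all: try (intros l [p [q [_ [_ [_ [Hp _]]]]]]; contradiction).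
  all: try (intros a Ha; apply (H a Ha)).
Qed.

Lemma insert C Z : maximal_wo_chain inc C -> nice inc Z ->
  (forall Y, C Y -> subset Y Z \/ subset Z Y) -> C Z.
Proof.
  intros [Hwo Hmax] HZ Hcmp. destruct Hwo as [Hn [Hc [Ha Hw]]].
  apply (Hmax (fun Y => C Y \/ Y = Z)); [|intros; left; auto| right; auto].
  split; [|split; [|split]].
  - intros X [HX|HX]; subst; auto.
  - intros X Y [HX|HX] [HY|HY]; subst; auto.
    + destruct (Hcmp Y HY); auto.
    + left; intros z h; auto.
  - intros X Y [HX|HX] [HY|HY] H1 H2; subst; auto;
      apply functional_extensionality; intro z; apply propositional_extensionality;
      split; auto.
  - intros D HD [X0 HX0].
    destruct (classic (exists X, D X /\ C X)) as [[X1 [HD1 HC1]]|Hno].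
    + destruct (Hw (fun X => D X /\ C X)) as [Xm [[HDm HCm] Hleast]];
        [intros X [_ h]; auto| exists X1; auto|].
      destruct (classic (D Z)) as [HDZ|HDZ].
      * destruct (classic (subset Xm Z)) as [Hs|Hs].
        -- exists Xm; split; auto. intros X HX. destruct (HD X HX) as [HC|E].
           ++ apply Hleast; auto.
           ++ subst; auto.
        -- exists Z; split; auto.
           assert (HZm : subset Z Xm) by (destruct (Hcmp Xm HCm); tauto).
           intros X HX; destruct (HD X HX) as [HC|E].
           ++ intros z h. apply (Hleast X); auto.
           ++ subst; intros z h; auto.
      * exists Xm; split; auto. intros X HX; destruct (HD X HX) as [HC|E].
        -- apply Hleast; auto.
        -- subst; contradiction.
    + destruct (HD X0 HX0) as [HC|E]; [exfalso; apply Hno; eauto|subst].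
      exists Z; split; auto. intros X HX. destruct (HD X HX) as [HC|E].
      * exfalso; apply Hno; eauto.
      * subst; intros z h; auto.
Qed.

Definition pre (a : nat -> P) k := fun z => exists i, i < k /\ z = a i.

Variable n : nat.
Hypothesis Hrank : ~ rank_ge inc (S n).

Definition Good M k a := 1 <= k /\ (forall i, i < k -> M (a i)) /\
   (forall i, i < k -> ~ span inc (pre a i) (a i)).

Lemma gen_M M : singular inc M -> (exists m, M m) ->
  exists k a, k <= n /\ (forall i, i < k -> M (a i)) /\ subset M (span inc (pre a k)).
Proof.
  intros HMs [m0 Hm0].
  assert (HsubM : forall k a, (forall i, i < k -> M (a i)) -> subset (span inc (pre a k)) M).
  { intros k a Ha. apply span_min; [apply HMs|]. intros z [i [Hi ->]]; auto. }
  assert (Step1 : exists k a, Good M k a /\ subset M (span inc (pre a k))).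
  { apply NNPP; intro H.
    apply (no_grow P L inc n Hrank
      (fun Y => exists k a, Good M k a /\ Y = span inc (pre a k) /\ ~ subset M Y))
      with (span inc (pre (fun _ => m0) 1)).
    - intros Y [k [a [[Hk [Ha Hs]] [-> _]]]]. split.
      + split; [apply span_sub|]. intros p q Hp Hq.
        apply HMs; apply (HsubM k a); auto.
      + exists (a 0). apply span_incl. exists 0; split; auto; lia.
    - intros Y [k [a [[Hk [Ha Hs]] [-> Hnc]]]].
      destruct (not_all_ex_not _ _ Hnc) as [m Hm].
      apply imply_to_and in Hm. destruct Hm as [HmM Hmn].
      set (a' := fun i => if i <? k then a i else m).
      assert (Hpre : forall i, i <= k -> forall z, pre a' i z <-> pre a i z).
      { intros i Hi z; split; intros [j [Hj ->]]; exists j; split; auto;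
          unfold a'; destruct (Nat.ltb_spec j k); auto; lia. }
      assert (HG : Good M (S k) a').
      { split; [lia|split].
        - intros i Hi; unfold a'; destruct (Nat.ltb_spec i k); auto.
        - intros i Hi Hsp. apply (span_mono (pre a' i) (pre a i)) in Hsp;
            [|intros z; apply Hpre; lia].
          unfold a' in Hsp; destruct (Nat.ltb_spec i k).
          + apply (Hs i); auto.
          + assert (i = k) by lia; subst; auto. }
      exists (span inc (pre a' (S k))). split; [|split].
      + exists (S k), a'; split; auto; split; auto.
        intro Hc. apply H. exists (S k), a'; auto.
      + apply span_mono. intros z Hz. apply Hpre in Hz; auto.
        destruct Hz as [j [Hj ->]]; exists j; split; auto.
      + intro Hc. apply Hmn, Hc, span_incl. exists k; split; auto.
        unfold a'; rewrite Nat.ltb_irrefl; auto.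
    - exists 1, (fun _ => m0). split; [|split; auto].
      + split; [lia|split]; auto.
        intros i Hi. apply span_empty. intros z [j [Hj _]]; lia.
      + intro Hc. apply H. exists 1, (fun _ => m0). split; auto.
        split; [lia|split]; auto.
        intros i Hi. apply span_empty. intros z [j [Hj _]]; lia. }
  destruct Step1 as [k [a [[Hk [Ha Hs]] Hcov]]].
  exists k, a. split; [|split]; auto.
  destruct (le_lt_dec k n) as [Hkn|Hkn]; auto. exfalso. apply Hrank.
  apply (rank_mono P L inc k); [|lia].
  apply (chainin_rank P L inc (fun i => span inc (pre a (S i))) k (fun _ => True)).
  split.
  - intros i Hi. split; [|split].
    + split; [apply span_sub|]. intros p q Hp Hq.
      apply HMs; apply (HsubM (S i) a); auto; intros j Hj; apply Ha; lia.
    + exists (a i). apply span_incl. exists i; auto.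
    + intros z _; exact I.
  - intros i Hi. split.
    + apply span_mono. intros z [j [Hj ->]]. exists j; split; auto.
    + intro Hc. apply (Hs (S i)); auto. apply Hc, span_incl. exists (S i); auto.
Qed.

End Two.

Theorem mainTheorem16 (P L : Type) (inc : P -> L -> Prop) (n : nat) :
  is_polar_space inc ->
  nondegenerate inc ->
  has_rank inc n ->
  2 <= n ->
  no_thin_lines inc ->
  (exists C, maximal_wo_chain inc C) ->
  exists S : P -> Prop,
    generates inc S /\
    forall K : Type, defect_le inc K -> card_le_plus S (2 * n) K.
Proof.
  intros Hps Hnd [Hrk Hrank] Hn2 Hthin [C HC].
  destruct Hrk as [X [HX1 _]]. destruct (HX1 0 ltac:(lia)) as [_ [p0 Hp0]]. clear HX1 Hp0 X.
  assert (Hsing0 : singular inc (fun z => z = p0)).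
  { split.
    - intros l [p [q [Hpq [_ [_ [E1 E2]]]]]]; subst; contradiction.
    - intros a b -> ->; apply col_refl. }
  destruct (ext_max P L inc n Hrank _ Hsing0 (ex_intro _ p0 eq_refl)) as [M1 [HM1 _]].
  destruct (disj P L inc Hps n Hrank Hnd (S n) M1 M1 HM1 HM1) as [M2 [HM2 Hdisj]].
  { intros Y HY. apply Hrank. eapply chainin_rank; eauto. }
  assert (Hfullnice : nice inc (fun _ => True)).
  { split; [intros l _ x _; exact I|].
    exists M1, M2; split; [auto|split; [auto|split; [auto|split; intros z _; exact I]]]. }
  assert (HCfull : C (fun _ => True)).
  { apply (insert P L inc); auto. intros Y _; left; intros z _; exact I. }
  pose proof (proj1 HC) as [Hnice [Hcmp [Hanti Hwell]]].
  destruct (Hwell C (fun X h => h) (ex_intro _ _ HCfull)) as [X0 [HCX0 HX0least]].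
  destruct (Hnice X0 HCX0) as [HX0sub [N1 [N2 [HN1 [HN2 [HNdisj [HN1X0 HN2X0]]]]]]].
  assert (Hne : forall M, max_singular inc M -> exists m, M m).
  { intros M [HMs HMm]. apply NNPP; intro H.
    assert (Hs : subset M (fun z => z = p0)) by (intros z Hz; exfalso; apply H; eauto).
    apply H. exists p0. apply (HMm _ Hsing0 Hs); auto. }
  destruct (gen_M P L inc n Hrank N1 (proj1 HN1) (Hne _ HN1)) as [k1 [a1 [Hk1 [Ha1 Hcov1]]]].
  destruct (gen_M P L inc n Hrank N2 (proj1 HN2) (Hne _ HN2)) as [k2 [a2 [Hk2 [Ha2 Hcov2]]]].
  set (U := fun (X : P -> Prop) z => exists Y, C Y /\ subset Y X /\ ~ subset X Y /\ Y z).
  set (pick := fun X => epsilon (inhabits p0) (fun z => X z /\ ~ U X z)).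
  set (E := fun z => exists X, C X /\ X <> X0 /\ (exists q, X q /\ ~ U X q) /\ z = pick X).
  set (S := fun z => (exists i, i < k1 /\ z = a1 i) \/ (exists i, i < k2 /\ z = a2 i) \/ E z).
  exists S. split.
  - assert (HX0S : subset X0 (span inc S)).
    { set (Z0 := span inc (fun z => N1 z \/ N2 z)).
      assert (HZ0X0 : subset Z0 X0).
      { apply span_min; auto. intros z [h|h]; auto. }
      assert (HCZ0 : C Z0).
      { apply (insert P L inc); auto.
        - split; [apply span_sub|]. exists N1, N2.
          split; [auto|split; [auto|split; [auto|split]]];
            intros z h; apply span_incl; auto.
        - intros Y HY. right. intros z h. apply (HX0least Y HY), HZ0X0, h. }
      intros z Hz. apply (HX0least Z0 HCZ0) in Hz.
      apply (span_min P L inc (fun z => N1 z \/ N2 z) (span inc S)) in Hz; auto; [apply span_sub|].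
      intros w [h|h].
      - apply Hcov1 in h. apply (span_mono P L inc (pre P a1 k1)); auto.
        intros y [i [Hi ->]]. left; eauto.
      - apply Hcov2 in h. apply (span_mono P L inc (pre P a2 k2)); auto.
        intros y [i [Hi ->]]. right; left; eauto. }
    assert (HallC : forall X1, C X1 -> subset X1 (span inc S)).
    { intros X1 HX1'. apply NNPP; intro Hbad.
      assert (Hd1 : forall X, (C X /\ ~ subset X (span inc S)) -> C X) by (intros ? []; auto).
      assert (Hd2 : exists X, C X /\ ~ subset X (span inc S)) by eauto.
      destruct (Hwell _ Hd1 Hd2) as [Xs [[HCs Hbs] Hls]].
      assert (HUs : subset (U Xs) (span inc S)).
      { intros z [Y [HY [H1 [H2 Hz]]]]. apply NNPP; intro Hzn.
        apply H2, (Hls Y). split; [exact HY|]. intro Hsub; apply Hzn, Hsub, Hz. }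
      destruct (classic (subset Xs (U Xs))) as [Hin|Hnin].
      { apply Hbs; intros z h; apply HUs, Hin, h. }
      assert (Hex : exists q, Xs q /\ ~ U Xs q).
      { apply NNPP; intro Hn; apply Hnin; intros z Hz; apply NNPP; intro; apply Hn; eauto. }
      pose proof (epsilon_spec (inhabits p0) _ Hex) as [Hpx Hpu].
      fold (pick Xs) in Hpx, Hpu.
      assert (Hne0 : Xs <> X0) by (intro; subst; apply Hbs, HX0S).
      assert (HpS : S (pick Xs)) by (right; right; exists Xs; auto).
      set (Z := span inc (fun z => U Xs z \/ z = pick Xs)).
      assert (HZXs : subset Z Xs).
      { apply span_min; [apply (Hnice Xs HCs)|]. intros z [[Y [_ [h [_ hz]]]]| ->]; [apply h, hz| exact Hpx]. }
      assert (HX0U : subset X0 (U Xs)).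
      { intros z h. exists X0. split; [exact HCX0|split; [apply HX0least; exact HCs|split; [|exact h]]].
        intro Hs. apply Hbs. intros w hw. apply HX0S, Hs, hw. }
      assert (HCZ : C Z).
      { apply (insert P L inc); auto.
        - split; [apply span_sub|]. exists N1, N2.
          split; [auto|split; [auto|split; [auto|split]]];
            intros z h; apply span_incl; left; apply HX0U; auto.
        - intros Y HY. destruct (classic (subset Xs Y)) as [h|h].
          + right. intros z hz. apply h, HZXs, hz.
          + destruct (Hcmp Y Xs HY HCs) as [h'|h']; [|contradiction].
            left. intros z hz. apply span_incl. left. exists Y; auto. }
      destruct (classic (subset Xs Z)) as [h|h].
      + apply Hbs. intros z hz. apply h in hz.
        apply (span_min P L inc (fun z => U Xs z \/ z = pick Xs) (span inc S)) in hz; auto; [apply span_sub|].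
        intros w [hw| ->]; auto. apply span_incl; auto.
      + apply Hpu. exists Z. split; auto. split; auto. split; auto.
        apply span_incl; auto. }
    intro p. apply NNPP; intro Hp.
    set (Z := span inc (fun z => (exists Y, C Y /\ Y z) \/ z = p)).
    assert (HCZ : C Z).
    { apply (insert P L inc); auto.
      - split; [apply span_sub|]. exists N1, N2.
        split; [auto|split; [auto|split; [auto|split]]];
          intros z h; apply span_incl; left; exists X0; auto.
      - intros Y HY. left. intros z hz. apply span_incl; left; eauto. }
    apply Hp, (HallC Z HCZ), span_incl; auto.
  - intros K HK. destruct (HK C (proj1 HC) X0 HCX0) as [g Hg].
    set (spec := fun z (r : ({i : nat | i < 2 * n} + K)%type) =>
      (exists i (Hi : i < 2 * n), r = inl (exist _ i Hi) /\
         ((i < n /\ z = a1 i) \/ (n <= i /\ z = a2 (i - n)))) \/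
      (exists X (HX : C X /\ X <> X0), r = inr (g (exist _ X HX)) /\ z = pick X)).
    assert (F : forall z, S z -> {r | spec z r}).
    { intros z Hz.
      destruct (excluded_middle_informative (exists i, i < k1 /\ z = a1 i)) as [e|e].
      { apply constructive_indefinite_description in e. destruct e as [i [Hi Hzi]].
        assert (Hi2 : i < 2 * n) by lia.
        exists (inl (exist _ i Hi2)). left. exists i, Hi2. split; auto. left; split; auto; lia. }
      destruct (excluded_middle_informative (exists i, i < k2 /\ z = a2 i)) as [e2|e2].
      { apply constructive_indefinite_description in e2. destruct e2 as [i [Hi Hzi]].
        assert (Hi2 : n + i < 2 * n) by lia.
        exists (inl (exist _ (n + i) Hi2)). left. exists (n + i), Hi2. split; auto.
        right; split; [lia|]. replace (n + i - n) with i by lia. auto. }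
      assert (HE : E z) by (destruct Hz as [h|[h|h]]; [contradiction|contradiction|exact h]).
      apply constructive_indefinite_description in HE. destruct HE as [X [HCX [Hne0 [_ Hz']]]].
      exists (inr (g (exist _ X (conj HCX Hne0)))). right. exists X, (conj HCX Hne0). auto. }
    exists (fun x => proj1_sig (F (proj1_sig x) (proj2_sig x))).
    intros [x Hx] [y Hy]. simpl.
    destruct (F x Hx) as [r1 Hr1], (F y Hy) as [r2 Hr2]. simpl. intros ->.
    destruct Hr1 as [[i [Hi [-> Hx']]]|[X [HX [-> Hx']]]];
    destruct Hr2 as [[j [Hj [E2 Hy']]]|[Y [HY [E2 Hy']]]]; try discriminate.
    + injection E2 as ->. destruct Hx' as [[? ->]|[? ->]], Hy' as [[? ->]|[? ->]];
        auto; lia.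
    + injection E2 as E2. apply Hg in E2. simpl in E2. subst. auto.
Qed.
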